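(* Let $G$ be a finite simple graph with an initial configuration and let $u,v$ be adjacent vertices with $\deg(u)=2$ and $\deg(v)\in\{1,2\}$. Then for every integer $t\geq0$, $|c_{t+1}(u)-c_{t+1}(v)|\leq \max\{3,\ |c_t(u)-c_t(v)|\}$.
   Context: Diffusion process: for a configuration $c_t:V(G)\to\mathbb{Z}$, $c_{t+1}(w)=c_t(w)-|\{x\in N(w): c_t(w)>c_t(x)\}|+|\{x\in N(w): c_t(w)<c_t(x)\}|$ for all $w$ simultaneously. *)

(* Defs.v *)
From mathcomp Require Import all_boot all_order all_algebra.
Set Implicit Arguments. Unset Strict Implicit. Unset Printing Implicit Defensive.
Import Order.TTheory GRing.Theory Num.Theory.
Local Open Scope ring_scope.

Definition simple_graph (T : finType) (e : rel T) : Prop :=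
  symmetric e /\ irreflexive e.

Definition deg (T : finType) (e : rel T) (w : T) : nat := #|[set x | e w x]|.

Definition diffuse_step (T : finType) (e : rel T) (c : T -> int) : T -> int :=
  fun w => c w - (#|[set x | e w x && (c x < c w)]|)%:Z
               + (#|[set x | e w x && (c w < c x)]|)%:Z.

Definition config (T : finType) (e : rel T) (c0 : T -> int) (t : nat) : T -> int :=
  iter t (diffuse_step e) c0.

(* Main.v *)
Require Import Defs.
From mathcomp Require Import all_boot all_order all_algebra.
From mathcomp Require Import zify.
Import Order.TTheory GRing.Theory Num.Theory.
Local Open Scope ring_scope.

Lemma card_split (T : finType) (e : rel T) (w v : T) (P : pred T) :
  e w v ->
  #|[set x | e w x && P x]| = (P v + #|[set x | e w x && P x] :\ v|)%N.
Proof.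
move=> ewv; rewrite (cardsD1 v) inE ewv /=; by [].
Qed.

Lemma card_rest (T : finType) (e : rel T) (w v : T) (P : pred T) :
  e w v ->
  (#|[set x | e w x && P x] :\ v| <= (deg e w).-1)%N.
Proof.
move=> ewv; rewrite /deg (cardsD1 v [set x | e w x]) inE ewv /=.
apply: subset_leq_card; apply/subsetP => x; rewrite !inE.
by case/andP=> -> /andP[-> _].
Qed.

Lemma step_eq (T : finType) (e : rel T) (c : T -> int) (w v : T) :
  e w v -> exists A B : nat,
    (A <= (deg e w).-1)%N /\ (B <= (deg e w).-1)%N /\
    diffuse_step e c w = c w - (nat_of_bool (c v < c w)%R)%:Z + (nat_of_bool (c w < c v)%R)%:Z
                         - A%:Z + B%:Z.
Proof.
move=> ewv.
exists #|[set x | e w x && (c x < c w)] :\ v|.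
exists #|[set x | e w x && (c w < c x)] :\ v|.
split; first exact: (@card_rest _ e w v (fun x => c x < c w) ewv).
split; first exact: (@card_rest _ e w v (fun x => c w < c x) ewv).
rewrite /diffuse_step.
rewrite (@card_split _ e w v (fun x => c x < c w) ewv).
rewrite (@card_split _ e w v (fun x => c w < c x) ewv).
rewrite !PoszD; lia.
Qed.

Theorem lemma6 (T : finType) (e : rel T) (c0 : T -> int) (u v : T) :
  simple_graph e -> e u v ->
  deg e u = 2%N -> (deg e v = 1%N \/ deg e v = 2%N) ->
  forall t : nat,
    `|config e c0 t.+1 u - config e c0 t.+1 v| <=
      Num.max 3 `|config e c0 t u - config e c0 t v|.
Proof.
move=> [esym _] euv du dv t.
have evu : e v u by rewrite esym.
rewrite /config iterS -/(config e c0 t).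
set c := config e c0 t.
have [A [B [hA [hB ->]]]] := @step_eq _ e c u v euv.
have [C [D [hC [hD ->]]]] := @step_eq _ e c v u evu.
rewrite du /= in hA hB.
have hC' : (C <= 1)%N by case: dv => hv; rewrite hv in hC hD; lia.
have hD' : (D <= 1)%N by case: dv => hv; rewrite hv in hC hD; lia.
move: hA hB hC' hD'.
case: (ltgtP (c u) (c v)) => h; rewrite /=; lia.
Qed.
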